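(* Let $m,n\ge 2$ and let $W$ be a channel from $\{1,\dots,m\}$ to $\{1,\dots,n\}$. Let $g=\max_{1\le j\le n}(\mathbf{1}W)_j$. Then $\underline{P}_W(1)=(g-m+1)_+$. If $\underline{P}_W(1)>0$ or $m=2$ or $n=2$, then $\overline{C}_{11}(W)=1-\underline{P}_W(1)$; otherwise \[ \log_2\gamma\le \overline{C}_{11}(W)\le \log_2(o-1)+\overline{P}_W(o)\log_2\frac{o}{o-1}, \] where $o=m\wedge n$, $a=\lfloor\mathbf{1}W\rfloor$, $b=\lceil \mathbf{1}W\rceil$ (entrywise), and $\gamma=\mathrm{w}(a)+\big(m-\sum_{j\in\mathrm{supp}(a)}b_j\big)_+$. Moreover, if $m\le n$ and $\mathbf{1}W\le\mathbf{1}'$ entrywise then $\overline{C}_{11}(W)=\log_2 m$, and if $m\ge n$ and $\mathbf{1}W\ge \mathbf{1}'$ entrywise then $\overline{C}_{11}(W)=\log_2 n$, where $\mathbf{1}'$ is the all-one vector of length $n$.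
   Context: A channel from $\mathcal{X}=\{1,\dots,m\}$ to $\mathcal{Y}=\{1,\dots,n\}$ is an $m\times n$ row-stochastic matrix $W=(W_{x,y})$. A deterministic channel is a channel whose entries are all $0$ or $1$ (identified with a map $\mathcal{X}\to\mathcal{Y}$). $\mathcal{D}$ is the set of all deterministic channels, $\mathrm{rank}(D)$ is the matrix rank. $\Lambda(W)=\{\lambda \text{ probability distribution on }\mathcal{D}: W=\sum_{D}\lambda_D D\}$. $C_{11}(\lambda)=\sum_D\lambda_D\log_2\mathrm{rank}(D)$ and $\overline{C}_{11}(W)=\sup\{C_{11}(\lambda):\lambda\in\Lambda(W)\}$. $P_\lambda(r)=\lambda(\{D:\mathrm{rank}(D)=r\})$, $\underline{P}_W(r)=\min_{\lambda\in\Lambda(W)}P_\lambda(r)$, $\overline{P}_W(r)=\max_{\lambda\in\Lambda(W)}P_\lambda(r)$. $\mathbf{1}$ is the all-one row vector of length $m$ (so $\mathbf{1}W$ is the vector of column sums). $\mathrm{w}(a)$ is the number of nonzero entries of $a$, $\mathrm{supp}(a)$ the set of indices of nonzero entries, $(x)_+=\max(x,0)$, $x\wedge y=\min(x,y)$. *)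

(* Defs.v *)
From HB Require Import structures.
From mathcomp Require Import all_boot all_order all_algebra.
From mathcomp Require Import all_classical all_reals all_analysis.
Set Implicit Arguments. Unset Strict Implicit. Unset Printing Implicit Defensive.
Import Order.TTheory GRing.Theory Num.Theory.
Local Open Scope classical_set_scope.
Local Open Scope ring_scope.

Section Channels.
Variable R : realType.
Variables m n : nat.

Definition log2 (x : R) : R := ln x / ln 2.

Definition is_channel (W : 'M[R]_(m, n)) : Prop :=
  (forall x y, 0 <= W x y) /\ (forall x, \sum_y W x y = 1).

(* deterministic channels are identified with maps 'I_m -> 'I_n *)
Definition detmap := {ffun 'I_m -> 'I_n}.

Definition detmx (f : detmap) : 'M[R]_(m, n) :=
  \matrix_(x, y) (f x == y)%:R.

Definition is_distr (l : {ffun detmap -> R}) : Prop :=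
  (forall f, 0 <= l f) /\ \sum_f l f = 1.

Definition Lambda (W : 'M[R]_(m, n)) : set {ffun detmap -> R} :=
  [set l | is_distr l /\ W = \sum_f l f *: detmx f].

Definition C11 (l : {ffun detmap -> R}) : R :=
  \sum_f l f * log2 (\rank (detmx f))%:R.

Definition C11bar (W : 'M[R]_(m, n)) : R := sup [set C11 l | l in Lambda W].

Definition Prank (l : {ffun detmap -> R}) (r : nat) : R :=
  \sum_(f | \rank (detmx f) == r) l f.

(* underline P_W(r) (a min, attained; written as inf) *)
Definition Pmin (W : 'M[R]_(m, n)) (r : nat) : R :=
  inf [set Prank l r | l in Lambda W].

(* overline P_W(r) (a max, attained; written as sup) *)
Definition Pmax (W : 'M[R]_(m, n)) (r : nat) : R :=
  sup [set Prank l r | l in Lambda W].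

Definition colsum (W : 'M[R]_(m, n)) (j : 'I_n) : R := \sum_i W i j.

Definition gmax (W : 'M[R]_(m, n)) : R := \big[Num.max/0]_j colsum W j.

Definition avec (W : 'M[R]_(m, n)) (j : 'I_n) : int := Num.floor (colsum W j).
Definition bvec (W : 'M[R]_(m, n)) (j : 'I_n) : int := Num.ceil (colsum W j).

Definition gammaW (W : 'M[R]_(m, n)) : int :=
  (#|[set j | avec W j != 0]|)%:Z
  + Num.max ((m%:Z) - \sum_(j | avec W j != 0) bvec W j) 0.

End Channels.

(* Main.v *)
Require Import Defs.
From HB Require Import structures.
From mathcomp Require Import all_boot all_order all_algebra.
From mathcomp Require Import all_classical all_reals all_analysis.
From mathcomp Require Import zify ring lra.
Import Order.TTheory GRing.Theory Num.Theory.
Local Open Scope ring_scope.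
Set Implicit Arguments. Unset Strict Implicit. Unset Printing Implicit Defensive.

Lemma card_sumb (T : finType) (P : {pred T}) : #|P| = (\sum_t (t \in P : nat))%N.
Proof. rewrite -sum1_card big_mkcond /=; apply: eq_bigr => t _; by case: (t \in P). Qed.

Lemma nontriv_sol (R : fieldType) (U Q : finType) (c : Q -> U -> R) (P : {pred U}) (E : {pred Q}) :
  (#|E| < #|P|)%N ->
  exists v : U -> R, [/\ forall u, u \notin P -> v u = 0, exists u, v u != 0 &
     forall q, q \in E -> \sum_u c q u * v u = 0].
Proof.
move=> hlt.
pose A : 'M[R]_(#|P|, #|E|) := \matrix_(i, k) c (enum_val k) (enum_val i).
have hK : kermx A != 0.
  rewrite -mxrank_eq0 mxrank_ker subn_eq0 -ltnNge.
  exact: leq_ltn_trans (rank_leq_col A) hlt.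
move: (kermx A) (mulmx_ker A) hK => K hKA hK.
case: (pickP (fun ij : 'I_#|P| * 'I_#|P| => K ij.1 ij.2 != 0)); last first.
  move=> H; case/eqP: hK; apply/matrixP => a b.
  have /negbFE/eqP -> := H (a, b); by rewrite mxE.
move=> [i j] /= hij.
have hw : row i K *m A = 0 by rewrite -row_mul hKA row0.
pose v u := \sum_(k < #|P|) (enum_val k == u)%:R * K i k.
exists v; split.
- move=> u hu; rewrite /v big1 // => k _.
  have -> : (enum_val k == u) = false.
    by apply/negbTE; apply: contraNneq hu => <-; apply: enum_valP.
  by rewrite mul0r.
- exists (enum_val j); rewrite /v (bigD1 j) //= eqxx mul1r big1 ?addr0 // => k hk.
  by rewrite (inj_eq enum_val_inj) (negbTE hk) mul0r.
- move=> q hq.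
  have -> : q = enum_val (enum_rank_in hq q) by rewrite enum_rankK_in.
  set kq := enum_rank_in hq q.
  have := congr1 (fun M : 'M[R]_(1, #|E|) => M 0 kq) hw; rewrite !mxE => hz; apply: etrans hz.
  rewrite /v; under eq_bigr do rewrite mulr_sumr.
  rewrite exchange_big /=; apply: eq_bigr => k _; rewrite !mxE /=.
  rewrite (bigD1 (enum_val k)) //= eqxx mul1r big1 ?addr0; first by rewrite mulrC.
  by move=> u hu; rewrite eq_sym (negbTE hu) mul0r mulr0.
Qed.
Section Core.
Variable R : realType.
Variables m n : nat.
Implicit Types (X D : 'M[R]_(m,n)).

Definition frac X := [set e : 'I_m * 'I_n | X e.1 e.2 \notin Num.int].
Definition ncol X := [set j | colsum X j \notin Num.int].
Definition phi X := (#|frac X| + #|ncol X|)%N.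
Definition valid (lo hi : 'I_n -> int) X :=
  [/\ forall i j, 0 <= X i j, forall i, \sum_j X i j = 1 &
      forall j, (lo j)%:~R <= colsum X j <= (hi j)%:~R].
Definition cnt (f : detmap m n) j := #|[set i | f i == j]|.
Definition good (lo hi : 'I_n -> int) (f : detmap m n) :=
  forall j, (lo j <= (cnt f j)%:Z <= hi j).

Lemma colsum_detmx f j : colsum (detmx R f) j = (cnt f j)%:R.
Proof.
rewrite /colsum /cnt; under eq_bigr do rewrite mxE.
rewrite -natr_sum card_sumb; congr _%:R; apply: eq_bigr => i _; by rewrite inE.
Qed.

Lemma natrz (k : nat) : (k%:Z)%:~R = k%:R :> R.
Proof. by rewrite -pmulrn. Qed.

Lemma base_decomp lo hi X : valid lo hi X -> #|frac X| = 0%N ->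
  exists l, is_distr l /\ X = \sum_f l f *: detmx R f /\
            (forall f, l f != 0 -> good lo hi f).
Proof.
case=> hpos hrow hcol hF.
have le1 i j : X i j <= 1.
  by rewrite -(hrow i) (bigD1 j) //= lerDl sumr_ge0.
have hint i j : X i j \is a Num.int.
  apply/negPn; apply/negP => h.
  have : (i, j) \in frac X by rewrite inE.
  by rewrite (card0_eq hF).
have h01 i j : X i j = 0 \/ X i j = 1.
  have /intrP [k hk] := hint i j.
  have := hpos i j; have := le1 i j; rewrite hk -[1]/(1%:~R) -[0]/(0%:~R).
  rewrite !ler_int => h1 h0.
  have [->|->] : k = 0 \/ k = 1 by lia.
  by left. by right.
have hex i : exists j, X i j = 1.
  case: (pickP (fun j => X i j == 1)) => [j /eqP hj|H]; first by exists j.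
  exfalso; have : \sum_j X i j = 0.
    apply: big1 => j _; case: (h01 i j) => // h; by move: (H j); rewrite h eqxx.
  by rewrite hrow => /eqP; rewrite oner_eq0.
have [g hg] := fin_all_exists hex.
pose f : detmap m n := [ffun i => g i].
have hX : X = detmx R f.
  apply/matrixP => i j; rewrite mxE ffunE.
  have [<-|hne] := eqVneq (g i) j; first by rewrite hg.
  case: (h01 i j) => // h; exfalso.
  have : 1 + 1 <= \sum_j X i j.
    rewrite (bigD1 j) //= (bigD1 (g i)) /=; last exact: hne.
    by rewrite h hg addrA lerDl sumr_ge0.
  by rewrite hrow -{3}[1]addr0 lerD2l ler10.
exists [ffun k => (k == f)%:R]; split; [split|split].
- by move=> k; rewrite ffunE ler0n.
- by rewrite (bigD1 f) //= ffunE eqxx big1 ?addr0 // => k hk; rewrite ffunE (negbTE hk).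
- rewrite (bigD1 f) //= ffunE eqxx scale1r big1 ?addr0 // => k hk.
  by rewrite ffunE (negbTE hk) scale0r.
- move=> k; rewrite ffunE; have [->|] := eqVneq k f; last by rewrite eqxx.
  move=> _ j; have := hcol j; rewrite hX colsum_detmx -natrz.
  by rewrite !ler_int.
Qed.

Lemma two_row lo hi X i y : valid lo hi X -> (i, y) \in frac X ->
  exists2 y', y' != y & (i, y') \in frac X.
Proof.
case=> _ hrow _ hiy.
case: (pickP (fun y' => (y' != y) && ((i, y') \in frac X))) => [y' /andP[h1 h2]|H].
  by exists y'.
exfalso; move: hiy; rewrite inE /= => /negP; apply.
have -> : X i y = 1 - \sum_(j | j != y) X i j by rewrite -(hrow i) (bigD1 y) //= addrK.
rewrite rpredB ?int_num1 // rpred_sum // => j hj.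
by move: (H j); rewrite hj /= inE /= => /negbFE.
Qed.

Lemma two_col X x j : (x, j) \in frac X -> colsum X j \is a Num.int ->
  exists2 x', x' != x & (x', j) \in frac X.
Proof.
move=> hxj hint.
case: (pickP (fun x' => (x' != x) && ((x', j) \in frac X))) => [x' /andP[h1 h2]|H].
  by exists x'.
exfalso; move: hxj; rewrite inE /= => /negP; apply.
have -> : X x j = colsum X j - \sum_(i | i != x) X i j by rewrite /colsum (bigD1 x) //= addrK.
rewrite rpredB // rpred_sum // => i hi.
by move: (H i); rewrite hi /= inE /= => /negbFE.
Qed.

Lemma card_ge2 (T : finType) (A : {set T}) a b : a \in A -> b \in A -> a != b -> (2 <= #|A|)%N.
Proof.
move=> ha hb hab; apply: (@leq_trans #|[set a; b]|); first by rewrite cards2 hab.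
apply: subset_leq_card; apply/fintype.subsetP => z; rewrite !inE.
by case/orP => /eqP ->.
Qed.

Lemma sum_pairn (I J : finType) (G : I * J -> nat) :
  (\sum_p G p = \sum_i \sum_j G (i, j))%N.
Proof. by rewrite (pair_bigA _ (fun i j => G (i, j))); apply: eq_bigr => -[]. Qed.

Lemma sum_pairr (I J : finType) (G : I * J -> R) :
  \sum_p G p = \sum_i \sum_j G (i, j).
Proof. by rewrite (pair_bigA _ (fun i j => G (i, j))); apply: eq_bigr => -[]. Qed.

Section ExD.
Variable X : 'M[R]_(m, n).
Let F := frac X.
Let rc i := #|[set y | (i, y) \in F]|.
Let cc j := #|[set x | (x, j) \in F]|.
Let tight j := colsum X j \is a Num.int.

Lemma hFr : #|F| = (\sum_i rc i)%N.
Proof.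
rewrite card_sumb sum_pairn.
by apply: eq_bigr => i _; rewrite /rc card_sumb; apply: eq_bigr => y _; rewrite inE.
Qed.

Lemma hFc : #|F| = (\sum_j cc j)%N.
Proof.
rewrite card_sumb sum_pairn exchange_big.
by apply: eq_bigr => j _; rewrite /cc card_sumb; apply: eq_bigr => x _; rewrite inE.
Qed.

Lemma hrc lo hi i : valid lo hi X -> (0 < rc i)%N -> (2 <= rc i)%N.
Proof.
move=> hv /card_gt0P [y]; rewrite inE => hy.
have [y' h1 h2] := two_row hv hy.
by apply: (@card_ge2 _ _ y' y) => //; rewrite inE.
Qed.

Lemma hcc j : tight j -> (0 < cc j)%N -> (2 <= cc j)%N.
Proof.
move=> ht /card_gt0P [x]; rewrite inE => hx.
have [x' h1 h2] := two_col hx ht.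
by apply: (@card_ge2 _ _ x' x) => //; rewrite inE.
Qed.

Lemma exD_gen (drop : pred 'I_n) :
  ((\sum_i (0 < rc i) + \sum_j [&& tight j, 0 < cc j & ~~ drop j]) < #|F|)%N ->
  exists D : 'M[R]_(m,n), [/\ forall i j, D i j != 0 -> (i,j) \in F,
    forall i, \sum_j D i j = 0,
    forall j, tight j -> ~~ drop j -> colsum D j = 0 &
    exists i j, D i j != 0].
Proof.
move=> hcount.
pose c (q : ('I_m + 'I_n)%type) (u : 'I_m * 'I_n) : R :=
  match q with inl i => (u.1 == i)%:R | inr j => (u.2 == j)%:R end.
pose E : {pred ('I_m + 'I_n)} := fun q => match q with inl i => (0 < rc i)%N
   | inr j => [&& tight j, (0 < cc j)%N & ~~ drop j] end.
pose P : {pred ('I_m * 'I_n)} := fun u => u \in F.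
have hE : (#|E| < #|P|)%N.
  rewrite card_sumb big_sumType /=.
  have -> : #|P| = #|F| by apply: eq_card.
  by [].
have [v [hv0 [u hu] hvE]] := nontriv_sol c hE.
have hvF x y : (x, y) \notin F -> v (x, y) = 0 by move=> h; apply: hv0.
exists (\matrix_(i, j) v (i, j)); split.
- move=> i j; rewrite mxE; apply: contraR => h; apply/eqP; exact: hvF.
- move=> i; under eq_bigr do rewrite mxE.
  case: (posnP (rc i)) => hri.
    apply: big1 => y _; apply: hvF; apply/negP => hy.
    by move/card0_eq: hri => /(_ y); rewrite inE hy.
  have := hvE (inl i) hri; rewrite /c.
  rewrite sum_pairr /= (bigD1 i) //= => h0; apply: etrans h0.
  rewrite [X in _ = _ + X]big1 ?addr0; first by apply: eq_bigr => y _; rewrite eqxx mul1r.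
  by move=> x hx; apply: big1 => y _; rewrite (negbTE hx) mul0r.
- move=> j ht hd; rewrite /colsum; under eq_bigr do rewrite mxE.
  case: (posnP (cc j)) => hcj.
    apply: big1 => x _; apply: hvF; apply/negP => hx.
    by move/card0_eq: hcj => /(_ x); rewrite inE hx.
  have : inr j \in E by rewrite unfold_in /= ht hcj hd.
  move/hvE; rewrite /c.
  rewrite sum_pairr exchange_big /= (bigD1 j) //= => h0; apply: etrans h0.
  rewrite [X in _ = _ + X]big1 ?addr0; first by apply: eq_bigr => x _; rewrite eqxx mul1r.
  by move=> y hy; apply: big1 => x _; rewrite (negbTE hy) mul0r.
- by exists u.1, u.2; rewrite mxE -surjective_pairing.
Qed.

Lemma exD lo hi : valid lo hi X -> (0 < #|F|)%N ->
  exists D : 'M[R]_(m,n), [/\ forall i j, D i j != 0 -> (i,j) \in F,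
    forall i, \sum_j D i j = 0,
    forall j, tight j -> colsum D j = 0 &
    exists i j, D i j != 0].
Proof.
move=> hv hF0.
have hr : (2 * \sum_i (0 < rc i) <= #|F|)%N.
  rewrite big_distrr /= hFr; apply: leq_sum => i _.
  case: (posnP (rc i)) => h; first by rewrite h.
  by rewrite muln1 (hrc hv h).
have hcj j : (2 * (tight j && (0 < cc j)) <= cc j)%N.
  case ht: (tight j) => //=; case: (posnP (cc j)) => h; first by rewrite h.
  by rewrite muln1 (hcc ht h).
have hcc0 e : e \in F -> (0 < cc e.2)%N.
  by move=> he; apply/card_gt0P; exists e.1; rewrite inE -surjective_pairing.
case: (pickP (fun e : 'I_m * 'I_n => (e \in F) && ~~ tight e.2)) => [e0 /andP[he0 hnt] | hall].
- have hc : (2 * \sum_j (tight j && (0 < cc j)) + 1 <= #|F|)%N.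
    rewrite big_distrr /= hFc (bigD1 e0.2) //= [X in (_ <= X)%N](bigD1 e0.2) //=.
    rewrite (negbTE hnt) /= muln0 add0n addnC leq_add ?hcc0 //.
    by apply: leq_sum => j _.
  have hcnt : ((\sum_i (0 < rc i) + \sum_j [&& tight j, (0 < cc j)%N & ~~ xpred0 j]) < #|F|)%N.
    have -> : (\sum_j [&& tight j, (0 < cc j)%N & ~~ xpred0 j] = \sum_j (tight j && (0 < cc j)))%N.
      by apply: eq_bigr => j _; rewrite /= andbT.
    lia.
  have [D [h1 h2 h3 h4]] := exD_gen hcnt.
  exists D; split => // j ht; exact: h3.
- have [e0 he0] : exists e0, e0 \in F by apply/card_gt0P.
  have ht0 : tight e0.2 by move: (hall e0); rewrite he0 /= => /negbFE.
  set j0 := e0.2 in ht0.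
  have hc : (2 * \sum_j (tight j && (0 < cc j)) <= #|F|)%N.
    by rewrite big_distrr /= hFc; apply: leq_sum => j _.
  have hsplit : (\sum_j (tight j && (0 < cc j)) =
      \sum_j [&& tight j, (0 < cc j)%N & ~~ (j == j0)] + 1)%N.
    rewrite (bigD1 j0) //= ht0 hcc0 // addnC; congr (_ + _)%N.
    rewrite [RHS](bigD1 j0) //= eqxx !andbF add0n; apply: eq_bigr => j hj.
    by rewrite hj andbT.
  have hcnt : ((\sum_i (0 < rc i) + \sum_j [&& tight j, (0 < cc j)%N & ~~ (j == j0)]) < #|F|)%N.
    lia.
  have [D [h1 h2 h3 h4]] := @exD_gen (fun j => j == j0) hcnt.
  exists D; split => // j ht.
  have hoth k : k != j0 -> colsum D k = 0.
    move=> hk; case htk: (tight k); first by apply: h3 => //; rewrite hk.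
    apply: big1 => x _; case: (eqVneq (D x k) 0) => // /h1 hxk.
    by move: (hall (x, k)); rewrite /= hxk htk.
  have [->|hj] := eqVneq j j0; last exact: hoth.
  have htot : \sum_k colsum D k = 0.
    by rewrite /colsum exchange_big /=; apply: big1 => i _; apply: h2.
  by move: htot; rewrite (bigD1 j0) //= big1 ?addr0 // => k hk; apply: hoth.
Qed.

End ExD.
Lemma colsumD (X D : 'M[R]_(m,n)) t j : colsum (X + t *: D) j = colsum X j + t * colsum D j.
Proof. rewrite /colsum mulr_sumr -big_split /=; apply: eq_bigr => i _; by rewrite !mxE. Qed.

Lemma card_lt_sub (T : finType) (A B : {set T}) x :
  A \subset B -> x \in B -> x \notin A -> (#|A| < #|B|)%N.
Proof. by move=> hAB hx hnx; apply: proper_card; apply/properP; split => //; exists x. Qed.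

Lemma step lo hi X D : valid lo hi X ->
  (forall i j, D i j != 0 -> (i,j) \in frac X) ->
  (forall i, \sum_j D i j = 0) ->
  (forall j, colsum X j \is a Num.int -> colsum D j = 0) ->
  (exists i j, D i j != 0) ->
  exists t, 0 < t /\ valid lo hi (X + t *: D) /\ (phi (X + t *: D) < phi X)%N.
Proof.
case=> hpos hrow hcol hsupp hDrow hDcol [i0 [j0 hD0]].
have [e0 he0] : exists e : 'I_m * 'I_n, D e.1 e.2 < 0.
  case: (ltrgtP (D i0 j0) 0) => [h|h|h]; [by exists (i0,j0) | | by move: hD0; rewrite h eqxx].
  case: (pickP (fun j => D i0 j < 0)) => [j hj|H]; first by exists (i0, j).
  exfalso; have hge : forall j, 0 <= D i0 j by move=> j; rewrite leNgt H.
  have := @psumr_eq0P _ _ xpredT (fun j => D i0 j) (fun j _ => hge j) (hDrow i0) j0 erefl.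
  by move=> h'; move: h; rewrite h' ltxx.
pose cX j := colsum X j. pose dD j := colsum D j.
pose act (k : ('I_m * 'I_n + 'I_n)%type) := match k with inl e => D e.1 e.2 < 0 | inr j => dD j != 0 end.
pose val (k : ('I_m * 'I_n + 'I_n)%type) : R := match k with
  | inl e => X e.1 e.2 / (- D e.1 e.2)
  | inr j => if 0 < dD j then ((Num.ceil (cX j))%:~R - cX j) / dD j
             else (cX j - (Num.floor (cX j))%:~R) / (- dD j) end.
have hnotint e : D e.1 e.2 != 0 -> X e.1 e.2 \notin Num.int.
  by move=> /hsupp; rewrite inE.
have hcnotint j : dD j != 0 -> cX j \notin Num.int.
  by move=> h; apply: contra h => /hDcol; rewrite /dD => ->.
have hceil j : cX j \notin Num.int -> 0 < (Num.ceil (cX j))%:~R - cX j.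
  move=> h; rewrite subr_gt0 lt_def ceil_ge andbT; apply: contra h => /eqP <-.
  exact: intr_int.
have hfloor j : cX j \notin Num.int -> 0 < cX j - (Num.floor (cX j))%:~R.
  move=> h; rewrite subr_gt0 lt_def floor_le andbT eq_sym; apply: contra h => /eqP <-.
  exact: intr_int.
have hvalpos k : act k -> 0 < val k.
  case: k => [e|j] /= h.
    have hX : 0 < X e.1 e.2.
      rewrite lt_def hpos andbT; apply: contra (hnotint e (ltr0_neq0 h)) => /eqP ->.
      exact: int_num0.
    by rewrite divr_gt0 // oppr_gt0.
  have hc := hcnotint j h.
  case: ifP => hd; first by rewrite divr_gt0 // hceil.
  by rewrite divr_gt0 ?hfloor // oppr_gt0 lt_neqAle h andTb leNgt hd.
case: (arg_minP val (he0 : act (inl e0))) => k hk hmin.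
set t := val k.
have ht : 0 < t := hvalpos k hk.
have hXe i j : (X + t *: D) i j = X i j + t * D i j by rewrite !mxE.
have hsubF : frac (X + t *: D) \subset frac X.
  apply/fintype.subsetP => e; rewrite !inE; apply: contraNN => hin.
  have hD : D e.1 e.2 = 0 by apply/eqP; apply: contraTT hin => /hnotint.
  by rewrite hXe hD mulr0 addr0.
have hsubC : ncol (X + t *: D) \subset ncol X.
  apply/fintype.subsetP => j; rewrite !inE; apply: contraNN => hin.
  by rewrite colsumD hDcol // mulr0 addr0.
exists t; split => //; split; first split.
- move=> i j; rewrite hXe; case: (leP 0 (D i j)) => hD.
    by rewrite addr_ge0 // mulr_ge0 // ltW.
  have := hmin (inl (i, j)) hD; rewrite /= ler_pdivlMr ?oppr_gt0 //.
  rewrite mulrN -/t => h; lra.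
- move=> i; under eq_bigr do rewrite hXe.
  by rewrite big_split /= -mulr_sumr hrow hDrow mulr0 addr0.
- move=> j; rewrite colsumD; have := hcol j; rewrite -/(cX j) -/(dD j).
  case/andP => hlo hhi.
  case: (ltrgtP (dD j) 0) => hd; last by rewrite hd mulr0 addr0 hlo hhi.
  + have := hmin (inr j) (ltr0_neq0 hd); rewrite /= ltNge (ltW hd) /=.
    rewrite ler_pdivlMr ?oppr_gt0 // -/t => h.
    have hfl : (lo j)%:~R <= (Num.floor (cX j))%:~R :> R.
      by rewrite ler_int floor_ge_int.
    apply/andP; split.
      apply: le_trans hfl _; rewrite mulrN in h; lra.
    have : t * dD j <= 0 by rewrite pmulr_rle0 // ltW.
    lra.
  + have := hmin (inr j) (lt0r_neq0 hd); rewrite /= hd.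
    rewrite ler_pdivlMr // -/t => h.
    have hce : (Num.ceil (cX j))%:~R <= (hi j)%:~R :> R.
      by rewrite ler_int ceil_le_int.
    apply/andP; split.
      have : 0 <= t * dD j by rewrite mulr_ge0 // ltW.
      lra.
    apply: le_trans hce; lra.
- have hkey : (exists2 e, e \in frac X & e \notin frac (X + t *: D)) \/
              (exists2 j, j \in ncol X & j \notin ncol (X + t *: D)).
    case hkk: k hk => [e|j] /= hk.
      left; exists e; first by rewrite inE hnotint // ltr0_neq0.
      rewrite inE negbK hXe /t hkk /=.
      have -> : X e.1 e.2 + X e.1 e.2 / - D e.1 e.2 * D e.1 e.2 = 0.
        by field; rewrite ltr0_neq0.
      exact: int_num0.
    right; exists j; first by rewrite inE hcnotint.
    rewrite inE negbK colsumD /t hkk /= -/(cX j) -/(dD j).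
    case: ifP => hd.
      have -> : cX j + (((Num.ceil (cX j))%:~R - cX j) / dD j) * dD j = (Num.ceil (cX j))%:~R.
        by field.
      exact: intr_int.
    have -> : cX j + ((cX j - (Num.floor (cX j))%:~R) / - dD j) * dD j = (Num.floor (cX j))%:~R.
      by field.
    exact: intr_int.
  rewrite /phi; have h1 := subset_leq_card hsubF; have h2 := subset_leq_card hsubC.
  case: hkey => [[e he hne]|[j hj hnj]].
    by rewrite -addSn; apply: leq_add => //; apply: card_lt_sub hsubF he hne.
  by rewrite -addnS; apply: leq_add => //; apply: card_lt_sub hsubC hj hnj.
Qed.

Lemma entry_sum (l : {ffun detmap m n -> R}) i j :
  (\sum_f l f *: detmx R f) i j = \sum_f l f * detmx R f i j.
Proof. by rewrite summxE; apply: eq_bigr => f _; rewrite mxE. Qed.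

Lemma decomp_k lo hi k : forall X, (phi X <= k)%N -> valid lo hi X ->
  exists l, is_distr l /\ X = \sum_f l f *: detmx R f /\
            (forall f, l f != 0 -> good lo hi f).
Proof.
elim: k => [|k IH] X hk hv.
  have hF : #|frac X| = 0%N by move: hk; rewrite /phi; case: #|frac X|.
  exact: (base_decomp hv hF).
case: (posnP #|frac X|) => hF; first exact: base_decomp hv hF.
have [D [h1 h2 h3 h4]] := exD hv hF.
have [t1 [ht1 [hv1 hp1]]] := step hv h1 h2 h3 h4.
have [t2 [ht2 [hv2 hp2]]] : exists t, 0 < t /\ valid lo hi (X + t *: - D) /\
    (phi (X + t *: - D) < phi X)%N.
  apply: step hv _ _ _ _.
  - by move=> i j; rewrite mxE oppr_eq0; apply: h1.
  - by move=> i; under eq_bigr do rewrite mxE; rewrite sumrN h2 oppr0.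
  - move=> j hj; rewrite /colsum; under eq_bigr do rewrite mxE.
    by rewrite sumrN; move: (h3 j hj); rewrite /colsum => ->; rewrite oppr0.
  - by case: h4 => i [j hij]; exists i, j; rewrite mxE oppr_eq0.
have hk1 : (phi (X + t1 *: D) <= k)%N by rewrite -ltnS; apply: leq_trans hp1 hk.
have hk2 : (phi (X + t2 *: - D) <= k)%N by rewrite -ltnS; apply: leq_trans hp2 hk.
have [l1 [[hl1p hl1s] [hX1 hg1]]] := IH _ hk1 hv1.
have [l2 [[hl2p hl2s] [hX2 hg2]]] := IH _ hk2 hv2.
have htt : t1 + t2 != 0 by rewrite lt0r_neq0 // addr_gt0.
exists [ffun f => (t2 * l1 f + t1 * l2 f) / (t1 + t2)]; split; [split|split].
- move=> f; rewrite ffunE; apply: divr_ge0; last exact: ltW (addr_gt0 ht1 ht2).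
  by apply: addr_ge0; apply: mulr_ge0 => //; apply: ltW.
- under eq_bigr do rewrite ffunE.
  rewrite -mulr_suml big_split /= -!mulr_sumr hl1s hl2s !mulr1 addrC divff //.
- apply/matrixP => i j; rewrite entry_sum.
  have e1 := congr1 (fun M : 'M[R]_(m, n) => M i j) hX1.
  have e2 := congr1 (fun M : 'M[R]_(m, n) => M i j) hX2.
  rewrite /= entry_sum !mxE in e1; rewrite /= entry_sum !mxE in e2.
  have -> : \sum_f [ffun f => (t2 * l1 f + t1 * l2 f) / (t1 + t2)] f * detmx R f i j =
     \sum_f (t2 / (t1 + t2) * (l1 f * detmx R f i j) + t1 / (t1 + t2) * (l2 f * detmx R f i j)).
    by apply: eq_bigr => f _; rewrite ffunE; field.
  rewrite big_split /= -!mulr_sumr -e1 -e2; field => //.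
- move=> f; rewrite ffunE => hf.
  have [h0|h0] := eqVneq (l1 f) 0.
    have [h0'|h0'] := eqVneq (l2 f) 0; last exact: hg2.
    by move: hf; rewrite h0 h0' !mulr0 addr0 mul0r eqxx.
  exact: hg1.
Qed.

Lemma decomp lo hi X : valid lo hi X ->
  exists l, is_distr l /\ X = \sum_f l f *: detmx R f /\
            (forall f, l f != 0 -> good lo hi f).
Proof. exact: (@decomp_k lo hi (phi X) X (leqnn _)). Qed.

End Core.

Section Rank.
Variable R : realType.
Variables m n : nat.

Lemma sum_cnt (f : detmap m n) : (\sum_j cnt f j)%N = m.
Proof.
rewrite /cnt; under eq_bigr do rewrite card_sumb.
rewrite exchange_big /=; apply: etrans (card_ord m); rewrite card_sumb.
apply: eq_bigr => i _.
rewrite (bigD1 (f i)) //= inE eqxx big1 ?addn0 // => j hj.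
by rewrite inE eq_sym (negbTE hj).
Qed.

Lemma rankE (f : detmap m n) : \rank (detmx R f) = (\sum_j (0 < cnt f j))%N.
Proof.
pose S := [set j | (0 < cnt f j)%N].
have -> : (\sum_j (0 < cnt f j))%N = #|S|.
  by rewrite card_sumb; apply: eq_bigr => j _; rewrite inE.
have hS x : f x \in S.
  by rewrite inE; apply/card_gt0P; exists x; rewrite inE.
have hS' (k : 'I_#|S|) : exists x, f x == enum_val k.
  have := enum_valP k; rewrite inE => /card_gt0P [x]; rewrite inE => hx.
  by exists x.
pose A : 'M[R]_(m, #|S|) := \matrix_(x, k) (f x == enum_val k)%:R.
pose B : 'M[R]_(#|S|, n) := \matrix_(k, y) (enum_val k == y)%:R.
have hAB : detmx R f = A *m B.
  apply/matrixP => x y; rewrite !mxE.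
  rewrite (bigD1 (enum_rank_in (hS x) (f x))) //= !mxE enum_rankK_in // eqxx mul1r.
  rewrite big1 ?addr0 // => k hk; rewrite !mxE.
  have -> : (f x == enum_val k) = false.
    apply/negbTE; apply: contra hk => /eqP h; apply/eqP; apply: enum_val_inj.
    by rewrite (enum_rankK_in (hS x) (hS x)) h.
  by rewrite mul0r.
have hA : A = detmx R f *m B^T.
  apply/matrixP => x k; rewrite !mxE (bigD1 (f x)) //= !mxE eqxx mul1r.
  rewrite big1 ?addr0; first by rewrite eq_sym.
  by move=> y hy; rewrite !mxE eq_sym (negbTE hy) mul0r.
pose C : 'M[R]_(#|S|, m) := \matrix_(k, x) ([pick x' | f x' == enum_val k] == Some x)%:R.
have hCA : C *m A = 1%:M.
  apply/matrixP => k k'; rewrite !mxE.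
  under eq_bigr do rewrite /C /A !mxE.
  case: (pickP (fun x' => f x' == enum_val k)) => [x0 /eqP hx0|H]; last by case: (hS' k) => x hx; move: (H x); rewrite hx.
  rewrite (bigD1 x0) //= eqxx mul1r big1 ?addr0.
    by rewrite hx0 (inj_eq enum_val_inj).
  by move=> x hx; case: eqP => [[h]|]; [move: hx; rewrite h eqxx | rewrite mul0r].
apply/eqP; rewrite eqn_leq; apply/andP; split.
  by rewrite hAB; apply: leq_trans (mxrankM_maxl _ _) (rank_leq_col _).
have := mxrankM_maxr C A; rewrite hCA mxrank1 => h.
apply: leq_trans h _; rewrite hA; exact: mxrankM_maxl.
Qed.

End Rank.

Section SupInf.
Variable R : realType.
Local Open Scope classical_set_scope.
Variable T : Type.

Lemma sup_img_ge (A : set T) (F : T -> R) u x0 :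
  (forall x, A x -> F x <= u) -> A x0 -> F x0 <= sup [set F x | x in A].
Proof.
move=> hu hx0; apply: sup_upper_bound; last by exists x0.
split; first by exists (F x0), x0.
by exists u => _ [x hx <-]; apply: hu.
Qed.

Lemma sup_img_le (A : set T) (F : T -> R) u x0 :
  (forall x, A x -> F x <= u) -> A x0 -> sup [set F x | x in A] <= u.
Proof.
move=> hu hx0; apply: ge_sup; first by exists (F x0), x0.
by move=> _ [x hx <-]; apply: hu.
Qed.

Lemma sup_img_eq (A : set T) (F : T -> R) u :
  (forall x, A x -> F x <= u) -> (exists2 x, A x & u <= F x) ->
  sup [set F x | x in A] = u.
Proof.
move=> hu [x0 hx0 hle]; apply/eqP; rewrite eq_le (sup_img_le hu hx0) /=.
exact: le_trans hle (sup_img_ge hu hx0).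
Qed.

Lemma inf_img_eq (A : set T) (F : T -> R) v :
  (forall x, A x -> v <= F x) -> (exists2 x, A x & F x <= v) ->
  inf [set F x | x in A] = v.
Proof.
move=> hv [x0 hx0 hle]; apply/eqP; rewrite eq_le; apply/andP; split.
  apply: le_trans _ hle; apply: (@ge_inf R [set F x | x in A]); last by exists x0.
  by exists v => _ [x hx <-]; apply: hv.
apply: lb_le_inf; first by exists (F x0), x0.
by move=> _ [x hx <-]; apply: hv.
Qed.
End SupInf.

Lemma card_classic (T : finType) (P : pred T) :
  #|[set j | P j]%classic| = #|[set j | P j]|.
Proof. apply: eq_card => j; rewrite inE; by apply/idP/idP; rewrite in_setE. Qed.

Section Log.
Variable R : realType.
Lemma ln2_gt0 : 0 < ln (2 : R).
Proof. by apply: ln_gt0; rewrite ltr1n. Qed.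

Lemma log2_1 : log2 (1 : R) = 0.
Proof. by rewrite /log2 ln1 mul0r. Qed.

Lemma log2_2 : log2 (2 : R) = 1.
Proof. rewrite /log2 divff //; apply: lt0r_neq0; exact: ln2_gt0. Qed.

Lemma log2_le (x y : R) : 0 < x -> x <= y -> log2 x <= log2 y.
Proof.
move=> hx hxy; rewrite /log2 ler_pM2r ?invr_gt0 ?ln2_gt0 //.
by rewrite ler_ln ?posrE // (lt_le_trans hx hxy).
Qed.

Lemma log2_ge0 (x : R) : 1 <= x -> 0 <= log2 x.
Proof. by move=> h; rewrite /log2 divr_ge0 ?ln_ge0 // ler1n. Qed.

Lemma log2_nat_le (k : nat) : log2 (k.+1%:R : R) <= k%:R.
Proof.
rewrite /log2 ler_pdivrMr ?ln2_gt0 // mulr_natl -lnXn //.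
rewrite ler_ln ?posrE ?exprn_gt0 // -natrX ler_nat.
exact: ltn_expl.
Qed.

Lemma log2_mul_div (a b : R) : 0 < a -> 0 < b -> log2 a + log2 (b / a) = log2 b.
Proof.
move=> ha hb; rewrite /log2 -mulrDl -lnM ?posrE ?divr_gt0 //.
by rewrite [a * _]mulrC divfK // lt0r_neq0.
Qed.
End Log.

Section Comb.
Variables m n : nat.
Implicit Type f : detmap m n.
Definition rk f := (\sum_j (0 < cnt f j))%N.

Lemma cnt_le f j : (cnt f j <= m)%N.
Proof. by rewrite -[X in (_ <= X)%N](sum_cnt f) (bigD1 j) //= leq_addr. Qed.

Lemma sum_cnt_oth f j : (\sum_(k | k != j) cnt f k = m - cnt f j)%N.
Proof. by rewrite -[X in (X - _)%N](sum_cnt f) [X in (X - _)%N](bigD1 j) //= addKn. Qed.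

Lemma rk_split f j : rk f = ((0 < cnt f j) + \sum_(k | k != j) (0 < cnt f k))%N.
Proof. by rewrite /rk (bigD1 j). Qed.

Lemma sum_pos_le (P : pred 'I_n) (F : 'I_n -> nat) :
  (\sum_(k | P k) (0 < F k) <= \sum_(k | P k) F k)%N.
Proof. by apply: leq_sum => k _; case: (F k). Qed.

Lemma sum_pos_eq0 (P : pred 'I_n) (F : 'I_n -> nat) :
  (\sum_(k | P k) (0 < F k))%N = 0%N -> (\sum_(k | P k) F k)%N = 0%N.
Proof.
move/eqP; rewrite !sum_nat_eq0 => /forallP H; apply/eqP; rewrite sum_nat_eq0.
apply/forallP => k; apply/implyP => hk; move/implyP: (H k) => /(_ hk).
by case: (F k).
Qed.

Lemma rk_pos f : (0 < m)%N -> (0 < rk f)%N.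
Proof.
move=> hm; case: (pickP (fun j => 0 < cnt f j)%N) => [j hj|H].
  by rewrite (rk_split f j) hj.
have : (\sum_j cnt f j)%N = 0%N.
  by apply: big1 => j _; move: (H j); case: (cnt f j).
by rewrite sum_cnt => h; rewrite h in hm.
Qed.

Lemma rk_le_m f : (rk f <= m)%N.
Proof. by rewrite -[X in (_ <= X)%N](sum_cnt f); apply: sum_pos_le. Qed.

Lemma rk_le_n f : (rk f <= n)%N.
Proof.
apply: (@leq_trans (\sum_(j < n) 1)%N); last by rewrite sum1_card card_ord.
by apply: leq_sum => j _; case: (0 < cnt f j)%N.
Qed.

Lemma rk_le_rest f j : (rk f <= (m - cnt f j).+1)%N.
Proof.
rewrite (rk_split f j) -sum_cnt_oth -[X in (_ <= X)%N]add1n; apply: leq_add; first by case: (0 < cnt f j)%N.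
exact: sum_pos_le.
Qed.

Lemma rk_full f j : (0 < m)%N -> cnt f j = m -> rk f = 1%N.
Proof.
move=> hm hc; rewrite (rk_split f j) hc hm.
have h0 : (\sum_(k | k != j) cnt f k)%N = 0%N by rewrite sum_cnt_oth hc subnn.
have : (\sum_(k | k != j) (0 < cnt f k) <= 0)%N by rewrite -[X in (_ <= X)%N]h0 sum_pos_le.
by rewrite leqn0 => /eqP ->.
Qed.

Lemma rk_ge2 f : (0 < m)%N -> (forall j, cnt f j < m)%N -> (2 <= rk f)%N.
Proof.
move=> hm hlt; have := rk_pos f hm.
case: (pickP (fun j => 0 < cnt f j)%N) => [j hj _|H]; last first.
  by rewrite /rk big1 // => j _; rewrite H.
rewrite (rk_split f j) hj.
case h: (\sum_(k | k != j) (0 < cnt f k))%N => //.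
move: (sum_pos_eq0 h); rewrite sum_cnt_oth => /eqP; rewrite subn_eq0 => hle.
by move: (hlt j); rewrite ltnNge hle.
Qed.

Lemma cnt_le_rk1 f j : (0 < m)%N -> (cnt f j <= m.-1 + (rk f == 1%N))%N.
Proof.
move=> hm; have := cnt_le f j; case: (eqVneq (cnt f j) m) => [h|h] hle.
  by rewrite (rk_full hm h) eqxx h addn1 prednK.
have h' : (cnt f j <= m.-1)%N by rewrite -ltnS prednK // ltn_neqAle h hle.
exact: leq_trans h' (leq_addr _ _).
Qed.

Lemma rk_gamma (R : realType) (c : 'I_n -> R) f : (forall j, 0 <= c j) ->
  (forall j, Num.floor (c j) <= (cnt f j)%:Z <= Num.ceil (c j)) ->
  (#|[set j | Num.floor (c j) != 0]|%:Z +
     Num.max (m%:Z - \sum_(j | Num.floor (c j) != 0) Num.ceil (c j)) 0 <= (rk f)%:Z).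
Proof.
move=> hc hb.
pose H j := Num.floor (c j) != 0.
have hH j : H j -> (0 < cnt f j)%N.
  move=> hj; have /andP[h1 _] := hb j.
  have : 0 <= Num.floor (c j) by rewrite floor_ge0.
  move: hj; rewrite /H; lia.
have hnH j : ~~ H j -> (cnt f j <= 1)%N.
  move=> hj; have /andP[_ h2] := hb j.
  have : Num.floor (c j) = 0 by apply/eqP; move: hj; rewrite /H negbK.
  move/eqP; rewrite floor_eq => /andP[_ hlt].
  have : Num.ceil (c j) <= 1 by rewrite ceil_le_int ltW.
  lia.
have hrk : rk f = (#|[set j | H j]| + \sum_(j | ~~ H j) cnt f j)%N.
  rewrite /rk (bigID H) /=; congr (_ + _)%N.
    rewrite card_sumb big_mkcond /=; apply: eq_bigr => j _; rewrite inE.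
    by case hj: (H j) => //; rewrite (hH j hj).
  by apply: eq_bigr => j hj; have := hnH j hj; case: (cnt f j) => [|[]].
pose A := (\sum_(j | H j) cnt f j)%N; pose B := (\sum_(j | ~~ H j) cnt f j)%N.
pose C := \sum_(j | H j) Num.ceil (c j); pose K := #|[set j | H j]|.
have hm : m = (A + B)%N by rewrite -[LHS](sum_cnt f) (bigID H).
have hC : (A%:Z <= C).
  rewrite /A /C -natz natr_sum; apply: ler_sum => j _; rewrite natz.
  by case/andP: (hb j).
have hrk' : rk f = (K + B)%N by rewrite hrk.
rewrite hrk' -/C -/K.
rewrite /Num.max; case: ifP => _; lia.
Qed.

End Comb.

Section Main.
Variable R : realType.
Variables m n : nat.
Implicit Types (W : 'M[R]_(m, n)) (l : {ffun detmap m n -> R}).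

Lemma rank_rk (f : detmap m n) : \rank (detmx R f) = rk f.
Proof. exact: rankE. Qed.

Lemma lam_colsum W l : Lambda W l -> forall j, colsum W j = \sum_f l f * (cnt f j)%:R.
Proof.
case=> _ hW j; rewrite [in LHS]hW /colsum.
under eq_bigr do rewrite entry_sum.
rewrite exchange_big /=; apply: eq_bigr => f _.
by rewrite -mulr_sumr -colsum_detmx.
Qed.

Lemma chan_valid W : is_channel W ->
  valid (fun j => Num.floor (colsum W j)) (fun j => Num.ceil (colsum W j)) W.
Proof. by case=> h1 h2; split => // j; rewrite floor_le ceil_ge. Qed.

Lemma exists_decomp W : is_channel W -> exists l, Lambda W l /\
  (forall f, l f != 0 -> forall j,
     Num.floor (colsum W j) <= (cnt f j)%:Z <= Num.ceil (colsum W j)).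
Proof.
move=> hW; have [l [hd [hX hg]]] := decomp (chan_valid hW).
by exists l; split => //; split.
Qed.

Lemma C11E l : C11 l = \sum_f l f * log2 (rk f)%:R.
Proof. by apply: eq_bigr => f _; rewrite rank_rk. Qed.

Lemma PrankE l r : Prank l r = \sum_f l f * (rk f == r)%:R.
Proof.
rewrite /Prank big_mkcond /=; apply: eq_bigr => f _; rewrite rank_rk.
by case: (rk f == r); rewrite ?mulr1 ?mulr0.
Qed.

Lemma sum_le_w l (g h : detmap m n -> R) : is_distr l -> (forall f, g f <= h f) ->
  \sum_f l f * g f <= \sum_f l f * h f.
Proof. by case=> hp _ H; apply: ler_sum => f _; apply: ler_wpM2l. Qed.

Lemma sum_le_supp l (g h : detmap m n -> R) : is_distr l ->
  (forall f, l f != 0 -> g f <= h f) -> \sum_f l f * g f <= \sum_f l f * h f.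
Proof.
case=> hp _ H; apply: ler_sum => f _.
have [->|hf] := eqVneq (l f) 0; first by rewrite !mul0r.
by apply: ler_wpM2l => //; apply: H.
Qed.

Lemma sum_affine l (a b : R) (g : detmap m n -> R) : is_distr l ->
  \sum_f l f * (a + b * g f) = a + b * \sum_f l f * g f.
Proof.
case=> _ hs; rewrite mulr_sumr.
under eq_bigr do rewrite mulrDr.
rewrite big_split /= -mulr_suml hs mul1r; congr (_ + _).
by apply: eq_bigr => f _; rewrite mulrCA.
Qed.

Lemma sum_const l (a : R) : is_distr l -> \sum_f l f * a = a.
Proof. by case=> _ hs; rewrite -mulr_suml hs mul1r. Qed.

Lemma prank_ge0 l r : is_distr l -> 0 <= Prank l r.
Proof. by case=> hp _; apply: sumr_ge0 => f _; apply: hp. Qed.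

Lemma prank_le1 l r : is_distr l -> Prank l r <= 1.
Proof.
move=> hd; rewrite PrankE; apply: (@le_trans _ _ (\sum_f l f * 1)).
  by apply: sum_le_w => // f; case: (rk f == r); rewrite ?ler01 ?lexx.
by rewrite sum_const.
Qed.

Lemma chan_le1 W : is_channel W -> forall i j, W i j <= 1.
Proof. by case=> hp hr i j; rewrite -(hr i) (bigD1 j) //= lerDl sumr_ge0. Qed.

Lemma sum_colsum W : is_channel W -> \sum_j colsum W j = m%:R.
Proof.
case=> _ hr; rewrite /colsum exchange_big /=.
by under eq_bigr do rewrite hr; rewrite sumr_const card_ord.
Qed.

Lemma colsum_ge0 W : is_channel W -> forall j, 0 <= colsum W j.
Proof. by case=> hp _ j; apply: sumr_ge0. Qed.

Lemma log2_rk_ge0 (f : detmap m n) : (0 < m)%N -> 0 <= log2 (rk f)%:R :> R.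
Proof. by move=> hm; apply: log2_ge0; rewrite ler1n rk_pos. Qed.

Lemma C11_le_logm l : (0 < m)%N -> is_distr l -> C11 l <= log2 m%:R.
Proof.
move=> hm hd; rewrite C11E; apply: (@le_trans _ _ (\sum_f l f * log2 m%:R)).
  apply: sum_le_w => // f.
  by apply: log2_le; rewrite ?ltr0n ?rk_pos // ler_nat rk_le_m.
by rewrite sum_const.
Qed.

Definition delta (c : detmap m n) : {ffun detmap m n -> R} := [ffun f => (f == c)%:R].

Lemma delta_lam c : Lambda (detmx R c) (delta c).
Proof.
split; [split|].
- by move=> f; rewrite ffunE ler0n.
- by rewrite (bigD1 c) //= ffunE eqxx big1 ?addr0 // => k hk; rewrite ffunE (negbTE hk).
- rewrite (bigD1 c) //= ffunE eqxx scale1r big1 ?addr0 // => k hk.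
  by rewrite ffunE (negbTE hk) scale0r.
Qed.

Lemma delta_prank c r : Prank (delta c) r = (rk c == r)%:R.
Proof.
rewrite PrankE (bigD1 c) //= ffunE eqxx mul1r big1 ?addr0 // => k hk.
by rewrite ffunE (negbTE hk) mul0r.
Qed.

End Main.

Section Constr.
Variable R : realType.
Variables m n : nat.
Implicit Types (W : 'M[R]_(m, n)) (l : {ffun detmap m n -> R}).

Definition mix (p : R) l1 l2 : {ffun detmap m n -> R} :=
  [ffun f => p * l1 f + (1 - p) * l2 f].

Lemma mix_lam W1 W2 l1 l2 p : 0 <= p <= 1 -> Lambda W1 l1 -> Lambda W2 l2 ->
  Lambda (p *: W1 + (1 - p) *: W2) (mix p l1 l2).
Proof.
case/andP => hp0 hp1 [[hp1' hs1] hW1] [[hp2' hs2] hW2].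
have hq : 0 <= 1 - p by rewrite subr_ge0.
split; [split|].
- by move=> f; rewrite ffunE addr_ge0 // mulr_ge0.
- rewrite /mix; under eq_bigr do rewrite ffunE.
  by rewrite big_split /= -!mulr_sumr hs1 hs2 !mulr1 addrC subrK.
- apply/matrixP => i j; rewrite entry_sum !mxE hW1 hW2 !entry_sum.
  rewrite [RHS](eq_bigr (fun f => p * (l1 f * detmx R f i j) + (1 - p) * (l2 f * detmx R f i j))).
    by rewrite big_split /= -!mulr_sumr.
  by move=> f _; rewrite ffunE mulrDl !mulrA.
Qed.

Lemma mix_prank l1 l2 p r : Prank (mix p l1 l2) r = p * Prank l1 r + (1 - p) * Prank l2 r.
Proof.
rewrite !PrankE [LHS](eq_bigr (fun f => p * (l1 f * (rk f == r)%:R) + (1 - p) * (l2 f * (rk f == r)%:R))).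
  by rewrite big_split /= -!mulr_sumr.
by move=> f _; rewrite ffunE mulrDl !mulrA.
Qed.

Lemma K0 W : is_channel W -> (0 < m)%N -> (forall j, colsum W j <= (m.-1)%:R) ->
  exists l, Lambda W l /\ Prank l 1 = 0.
Proof.
move=> hW hm hc; have [l [hl hs]] := exists_decomp hW.
exists l; split => //; rewrite PrankE; apply: big1 => f _.
have [->|hf] := eqVneq (l f) 0; first by rewrite mul0r.
have h2 : (2 <= rk f)%N.
  apply: rk_ge2 => // j; have /andP[_ h] := hs f hf j.
  have h' : Num.ceil (colsum W j) <= (m.-1)%:Z by rewrite ceil_le_int natrz.
  have : ((cnt f j)%:Z <= (m.-1)%:Z) by exact: le_trans h h'.
  rewrite lez_nat => hle; apply: leq_ltn_trans hle _; by rewrite ltn_predL.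
have -> : (rk f == 1%N) = false by apply/eqP => h; rewrite h in h2.
by rewrite mulr0.
Qed.

Lemma colsum_lin (A B : 'M[R]_(m, n)) a b j :
  colsum (a *: (A - b *: B)) j = a * (colsum A j - b * colsum B j).
Proof.
rewrite /colsum mulr_sumr -sumrB mulr_sumr; apply: eq_bigr => i _.
by rewrite !mxE mulrBr.
Qed.

Lemma K1 W : is_channel W -> (2 <= m)%N -> (0 < n)%N ->
  exists l, Lambda W l /\ Prank l 1 <= Num.max (gmax W - m%:R + 1) 0.
Proof.
move=> hW hm hn.
have hm0 : (0 < m)%N by apply: leq_trans hm.
have hm1 : m%:R = (m.-1)%:R + 1 :> R by rewrite natr1 prednK.
have [js _ hjs] := @eq_bigmax _ _ _ 0 (Ordinal hn) xpredT (colsum W) erefl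
   (fun j _ => colsum_ge0 hW j).
have hg : gmax W = colsum W js by exact: hjs.
have hgmax j : colsum W j <= gmax W by apply: le_bigmax.
case: (lerP (gmax W) (m.-1)%:R) => hgl.
  have [l [hl h0]] := K0 hW hm0 (fun j => le_trans (hgmax j) hgl).
  by exists l; split => //; rewrite h0 le_max lexx orbT.
set p := gmax W - m%:R + 1.
have hp0 : 0 < p by rewrite /p; lra.
have hWle := chan_le1 hW.
have [hWp hWr] := hW.
have hgm : gmax W <= m%:R.
  rewrite hg /colsum; apply: (@le_trans _ _ (\sum_(i < m) (1 : R))).
    by apply: ler_sum => i _; apply: hWle.
  by rewrite sumr_const card_ord.
have hp1 : p <= 1 by rewrite /p; lra.
pose c : detmap m n := [ffun _ => js].
have hE x y : detmx R c x y = (y == js)%:R by rewrite mxE ffunE eq_sym.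
have hc x y : (c x == y) = (y == js) by rewrite ffunE eq_sym.
have hcnt : cnt c js = m.
  rewrite /cnt -[RHS]card_ord; apply: eq_card => i; by rewrite inE ffunE eqxx.
have hrk1 : rk c = 1%N by apply: rk_full hcnt.
have hWx x : p <= W x js.
  have hall : \sum_(x' < m) (1 : R) = m%:R by rewrite sumr_const card_ord.
  move: hall; rewrite (bigD1 x) //= => hall.
  have hle : \sum_(x' | x' != x) W x' js <= \sum_(x' | x' != x) (1 : R).
    by apply: ler_sum => i _; apply: hWle.
  have : gmax W = W x js + \sum_(x' | x' != x) W x' js by rewrite hg /colsum (bigD1 x).
  rewrite /p; lra.
case: (eqVneq p 1) => hp1'.
  have hWE : W = detmx R c.
    apply/matrixP => x y; rewrite hE.
    have hx1 : W x js = 1 by apply/eqP; rewrite eq_le hWle /= -hp1' hWx.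
    have hrest : \sum_(y' | y' != js) W x y' = 0.
      by have := hWr x; rewrite (bigD1 js) //= hx1 => h; lra.
    have [->|hy] := eqVneq y js; first by rewrite hx1.
    exact: (psumr_eq0P (fun i _ => hWp x i) hrest hy).
  exists (delta R c); split; first by rewrite hWE; apply: delta_lam.
  by rewrite delta_prank hrk1 eqxx -hp1' le_max lexx.
have hq : 0 < 1 - p by rewrite subr_gt0 lt_neqAle hp1' hp1.
pose W' := (1 - p)^-1 *: (W - p *: detmx R c).
have hW' : is_channel W'.
  split.
    move=> x y; rewrite !mxE hc; apply: mulr_ge0; first by rewrite invr_ge0 ltW.
    have [->|hy] := eqVneq y js; first by rewrite mulr1 subr_ge0.
    by rewrite mulr0 subr0.
  move=> x; under eq_bigr do rewrite !mxE hc.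
  rewrite -mulr_sumr sumrB -mulr_sumr (hWr x) (bigD1 js) //= eqxx big1 ?addr0 ?mulr1.
    by rewrite mulVf // lt0r_neq0.
  by move=> y hy; rewrite (negbTE hy).
have hcW' j : colsum W' j <= (m.-1)%:R.
  rewrite colsum_lin colsum_detmx.
  have [->|hj] := eqVneq j js.
    rewrite hcnt -hg.
    have -> : gmax W - p * m%:R = (m.-1)%:R * (1 - p) by rewrite /p hm1; ring.
    by rewrite mulrCA mulVf ?mulr1 // lt0r_neq0.
  have -> : cnt c j = 0%N.
    apply/eqP; rewrite cards_eq0; apply/eqP/setP => i; rewrite !inE ffunE.
    by rewrite eq_sym (negbTE hj).
  rewrite mulr0 subr0.
  have hsum := sum_colsum hW; rewrite (bigD1 js) //= (bigD1 j) //= in hsum.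
  have hrest : 0 <= \sum_(i | (i != js) && (i != j)) colsum W i.
    by apply: sumr_ge0 => i _; apply: colsum_ge0.
  have hle : colsum W j <= 1 - p by rewrite /p hg; lra.
  apply: (@le_trans _ _ 1); last by rewrite ler1n -ltnS prednK.
  by rewrite mulrC ler_pdivrMr // mul1r.
have [l' [hl' h0']] := K0 hW' hm0 hcW'.
exists (mix p (delta R c) l'); split.
  have -> : W = p *: detmx R c + (1 - p) *: W'.
    rewrite /W' scalerA mulfV ?lt0r_neq0 // scale1r.
    by rewrite addrC subrK.
  apply: mix_lam => //; first by rewrite ltW.
  exact: delta_lam.
by rewrite mix_prank delta_prank hrk1 eqxx h0' mulr0 addr0 mulr1 le_max lexx.
Qed.

End Constr.

Unset Implicit Arguments.
Theorem theorem2 (R : realType) (m n : nat) (W : 'M[R]_(m, n)) :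
  (2 <= m)%N -> (2 <= n)%N -> is_channel W ->
  let P1 := Pmin W 1 in
  let o := minn m n in
  [/\ P1 = Num.max (gmax W - m%:R + 1) 0,
      (0 < P1 \/ m = 2%N \/ n = 2%N) -> C11bar W = 1 - P1,
      ~ (0 < P1 \/ m = 2%N \/ n = 2%N) ->
        log2 (gammaW W)%:~R <= C11bar W /\
        C11bar W <= log2 (o.-1)%:R + Pmax W o * log2 (o%:R / (o.-1)%:R),
      (m <= n)%N -> (forall j, colsum W j <= 1) -> C11bar W = log2 m%:R
    & (n <= m)%N -> (forall j, 1 <= colsum W j) -> C11bar W = log2 n%:R].
Proof.
move=> hm hn hW P1 o.
have hm0 : (0 < m)%N by apply: leq_trans hm.
have hn0 : (0 < n)%N by apply: leq_trans hn.
have hm1 : m%:R = (m.-1)%:R + 1 :> R by rewrite natr1 prednK.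
have [js _ hjs] := @eq_bigmax _ _ _ 0 (Ordinal hn0) xpredT (colsum W) erefl
   (fun j _ => colsum_ge0 hW j).
have hg : gmax W = colsum W js by exact: hjs.
have [l0 [hl0 hs0]] := exists_decomp hW.
have hlow l : Lambda W l -> Num.max (gmax W - m%:R + 1) 0 <= Prank l 1.
  move=> hl; rewrite ge_max prank_ge0 ?andbT; last by case: hl.
  have hd : is_distr l by case: hl.
  have : gmax W <= (m.-1)%:R + 1 * Prank l 1.
    rewrite hg (lam_colsum hl) PrankE -(sum_affine _ _ _ hd).
    apply: sum_le_w => // f; rewrite mul1r -natrD ler_nat.
    exact: cnt_le_rk1.
  rewrite mul1r; lra.
have hP1 : P1 = Num.max (gmax W - m%:R + 1) 0.
  rewrite /P1 /Pmin; apply: inf_img_eq; first exact: hlow.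
  by have [l [hl hle]] := K1 hW hm hn0; exists l.
clearbody P1.
have hC11ub l : Lambda W l -> C11 l <= log2 m%:R.
  by case=> hd _; apply: C11_le_logm.
split => //.
- move=> hA; rewrite /C11bar; apply: sup_img_eq.
    move=> l hl; have hd : is_distr l by case: hl.
    have hPl : P1 <= Prank l 1 by rewrite hP1; apply: hlow.
    rewrite C11E.
    case: (boolP (0 < P1)) => hP.
      have hPe : P1 = gmax W - m%:R + 1.
        move: hP; rewrite hP1 lt_max ltxx orbF => hp.
        by apply/max_idPl; apply: ltW.
      apply: (@le_trans _ _ (\sum_f l f * (m%:R + (-1) * (cnt f js)%:R))).
        apply: sum_le_w => // f; rewrite mulN1r -natrB ?cnt_le //.
        apply: le_trans (log2_nat_le _ _); apply: log2_le; first by rewrite ltr0n rk_pos.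
        by rewrite ler_nat rk_le_rest.
      rewrite sum_affine // -(lam_colsum hl) -hg hPe; lra.
    have h2 : (0 < m)%N -> forall f : detmap m n, (rk f <= 2)%N.
      move=> _ f; case: hA => [hA|[h|h]]; first by rewrite hA in hP.
        by apply: leq_trans (rk_le_m f) _; rewrite h.
      by apply: leq_trans (rk_le_n f) _; rewrite h.
    apply: (@le_trans _ _ (\sum_f l f * (1 + (-1) * (rk f == 1%N)%:R))).
      apply: sum_le_w => // f; have := rk_pos f hm0; have := h2 hm0 f.
      case: (rk f) => [|[|[|k]]] //= _ _; first by rewrite log2_1; lra.
      by rewrite log2_2; lra.
    rewrite sum_affine // -PrankE; lra.
  have [l [hl hle]] := K1 hW hm hn0; exists l => //.
  have hd : is_distr l by case: hl.
  have hle' : Prank l 1 <= P1 by rewrite hP1.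
  rewrite C11E.
  apply: (@le_trans _ _ (\sum_f l f * (1 + (-1) * (rk f == 1%N)%:R))).
    by rewrite sum_affine // -PrankE; lra.
  apply: sum_le_w => // f; have := rk_pos f hm0.
  case: (rk f) => [|[|k]] //= _; first by rewrite log2_1; lra.
  rewrite mulr0 addr0; apply: (@le_trans _ _ (log2 2)); first by rewrite log2_2.
  by apply: log2_le => //; rewrite ler_nat.
- move=> hnA; split.
    rewrite /C11bar; apply: le_trans (sup_img_ge hC11ub hl0).
    have hd : is_distr l0 by case: hl0.
    rewrite C11E -[X in X <= _](sum_const _ hd); apply: sum_le_supp => // f hf.
    have hgam : gammaW W <= (rk f)%:Z.
      rewrite /gammaW card_classic.
      exact: (rk_gamma (c := colsum W) (colsum_ge0 hW) (hs0 f hf)).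
    case: (ltP 0 (gammaW W)) => hgp.
      apply: log2_le; first by rewrite ltr0z.
      by rewrite -natrz ler_int.
    rewrite /log2 ln0 ?mul0r; first exact: log2_rk_ge0.
    by rewrite -[0]/(0%:~R) ler_int.
  have ho2 : (2 <= o)%N by rewrite /o leq_min hm hn.
  have ho1 : (0 < (o.-1)%:R :> R) by rewrite ltr0n -ltnS prednK //; apply: leq_trans ho2.
  have ho0 : (0 < o%:R :> R) by rewrite ltr0n; apply: leq_trans ho2.
  set L := log2 (o%:R / (o.-1)%:R : R).
  have hL : 0 <= L.
    apply: log2_ge0; rewrite ler_pdivlMr // mul1r ler_nat.
    exact: leq_pred.
  rewrite /C11bar; apply: (sup_img_le _ hl0) => l hl.
  have hd : is_distr l by case: hl.
  apply: (@le_trans _ _ (\sum_f l f * (log2 (o.-1)%:R + L * (rk f == o)%:R))).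
    rewrite C11E; apply: sum_le_w => // f.
    have hro : (rk f <= o)%N by rewrite leq_min rk_le_m rk_le_n.
    have hr0 := rk_pos f hm0.
    case: (eqVneq (rk f) o) => [->|hne].
      by rewrite mulr1 /L log2_mul_div.
    rewrite mulr0 addr0; apply: log2_le; first by rewrite ltr0n.
    rewrite ler_nat -ltnS prednK; first by rewrite ltn_neqAle hne hro.
    exact: leq_trans ho2.
  rewrite sum_affine // -PrankE [_ * L]mulrC lerD2l; apply: ler_wpM2l => //.
  rewrite /Pmax; apply: (@sup_img_ge R _ (Lambda W) (fun l => Prank l o) 1 l) => //.
  by move=> l' [hd' _]; apply: prank_le1.
- move=> hmn hcol; rewrite /C11bar; apply: sup_img_eq; first exact: hC11ub.
  exists l0 => //; have hd : is_distr l0 by case: hl0.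
  rewrite C11E -[X in X <= _](sum_const _ hd); apply: sum_le_supp => // f hf.
  have -> : rk f = m.
    rewrite -[RHS](sum_cnt f); apply: eq_bigr => j _.
    have /andP[_ h] := hs0 f hf j.
    have : Num.ceil (colsum W j) <= 1 by rewrite ceil_le_int.
    move=> h1; have : ((cnt f j)%:Z <= 1) by apply: le_trans h h1.
    by rewrite lez_nat; case: (cnt f j) => [|[]].
  exact: lexx.
- move=> hnm hcol; rewrite /C11bar; apply: sup_img_eq.
    move=> l [hd _]; rewrite C11E; apply: (@le_trans _ _ (\sum_f l f * log2 n%:R)).
      apply: sum_le_w => // f; apply: log2_le; first by rewrite ltr0n rk_pos.
      by rewrite ler_nat rk_le_n.
    by rewrite sum_const.
  exists l0 => //; have hd : is_distr l0 by case: hl0.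
  rewrite C11E -[X in X <= _](sum_const _ hd); apply: sum_le_supp => // f hf.
  have -> : rk f = n.
    rewrite /rk (eq_bigr (fun _ => 1%N)); first by rewrite sum1_card card_ord.
    move=> j _; have /andP[h _] := hs0 f hf j.
    have : 1 <= Num.floor (colsum W j) by rewrite floor_ge_int.
    move=> h1; have : (1 <= (cnt f j)%:Z) by apply: le_trans h1 h.
    by rewrite lez_nat; case: (cnt f j).
  exact: lexx.
Qed.
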